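(* Let $n\ge 1$, $\ell=2n^2-1$, and let $S_1,\dots,S_\ell$ be pairwise disjoint finite sets with $|S_i|\le n^2$ for every $i$. Then there is an injective map $\phi$ from $S_1\cup\dots\cup S_\ell$ to the set of $2$-element subsets of $\{1,\dots,2n^2\}$ such that for every $i$ and all distinct $s,s'\in S_i$, the sets $\phi(s)$ and $\phi(s')$ are disjoint. *)

(* Defs.v *)
From mathcomp Require Import all_boot.
Set Implicit Arguments. Unset Strict Implicit. Unset Printing Implicit Defensive.

(* Main.v *)
Require Import Defs.
From mathcomp Require Import all_boot zify.
Set Implicit Arguments. Unset Strict Implicit.

Definition va (m i k : nat) := if k == 0 then i else if i + k < 2*m-1 then i + k else i + k - (2*m-1).
Definition vb (m i k : nat) := if k == 0 then 2*m-1 else if k <= i then i - k else i + (2*m-1) - k.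

Ltac crush := rewrite /va /vb; repeat (case: ifP => ?); lia.

Lemma F1 m i k : 1 <= m -> i < 2*m-1 -> k < m ->
  [/\ va m i k != vb m i k, va m i k < 2*m & vb m i k < 2*m].
Proof. move=> *; split; crush. Qed.

Lemma F2 m i k l : 1 <= m -> i < 2*m-1 -> k < m -> l < m -> k != l ->
  (va m i k != va m i l) && (va m i k != vb m i l) &&
  (vb m i k != va m i l) && (vb m i k != vb m i l).
Proof. move=> *; crush. Qed.

Lemma F3 m i j k l : 1 <= m -> i < 2*m-1 -> j < 2*m-1 -> k < m -> l < m ->
  (va m i k == va m j l) || (va m i k == vb m j l) ->
  (vb m i k == va m j l) || (vb m i k == vb m j l) -> (i == j) && (k == l).
Proof. move=> ? ? ? ? ?; rewrite /va /vb; repeat (case: ifP => ?); lia. Qed.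
Definition E (m i k : nat) : {set 'I_(2*m)} :=
  [set y : 'I_(2*m) | (val y == va m i k) || (val y == vb m i k)].

Lemma card2 N a b : a < N -> b < N -> a != b ->
  #|[set y : 'I_N | (val y == a) || (val y == b)]| = 2.
Proof.
move=> ha hb hab.
have -> : [set y : 'I_N | (val y == a) || (val y == b)] = [set Ordinal ha; Ordinal hb].
  by apply/setP => y; rewrite !inE -!val_eqE.
by rewrite cards2 -val_eqE /= hab.
Qed.

Lemma memE m i k (y : 'I_(2*m)) : (y \in E m i k) = (val y == va m i k) || (val y == vb m i k).
Proof. by rewrite inE. Qed.

Lemma E_card m i k : 1 <= m -> i < 2*m-1 -> k < m -> #|E m i k| = 2.
Proof. move=> h1 h2 h3; case: (F1 h1 h2 h3) => ? ? ?; exact: card2. Qed.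

Lemma E_disj m i k l : 1 <= m -> i < 2*m-1 -> k < m -> l < m -> k != l ->
  [disjoint E m i k & E m i l].
Proof.
move=> h1 h2 h3 h4 h5; have := F2 h1 h2 h3 h4 h5.
rewrite disjoint_subset; move=> H; apply/subsetP => y; rewrite !inE.
move: H; lia.
Qed.

Lemma E_inj m i j k l : 1 <= m -> i < 2*m-1 -> j < 2*m-1 -> k < m -> l < m ->
  E m i k = E m j l -> i = j /\ k = l.
Proof.
move=> h1 h2 h3 h4 h5 he.
case: (F1 h1 h2 h4) => _ ha hb.
have A : Ordinal ha \in E m j l by rewrite -he memE eqxx.
have B : Ordinal hb \in E m j l by rewrite -he memE eqxx orbT.
rewrite !memE /= in A B.
have := F3 h1 h2 h3 h4 h5 A B. lia.
Qed.
Lemma idx_lt T (A : {set T}) s : s \in A -> index s (enum A) < #|A|.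
Proof. by move=> h; rewrite cardE index_mem mem_enum. Qed.

Lemma main_gen m (hm : 1 <= m) (T : finType) (S : 'I_(2 * m - 1) -> {set T})
    (hdisj : forall i j, i != j -> [disjoint S i & S j])
    (hsize : forall i, #|S i| <= m) :
  exists phi : T -> {set 'I_(2 * m)},
    [/\ {in \bigcup_i S i &, injective phi},
        (forall s, s \in \bigcup_i S i -> #|phi s| = 2)
      & (forall i s s', s \in S i -> s' \in S i -> s != s' ->
           [disjoint phi s & phi s'])].
Proof.
pose phi s := if [pick i | s \in S i] is Some i then E m i (index s (enum (S i))) else set0.
have phiE : forall i s, s \in S i -> phi s = E m i (index s (enum (S i))).
  move=> i s hs; rewrite /phi; case: pickP => [j hj|H]; last by have := H i; rewrite hs.
  case: (eqVneq j i) => [->//|ne].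
  by have := disjointFr (hdisj _ _ ne) hj; rewrite hs.
have klt : forall i s, s \in S i -> index s (enum (S i)) < m.
  by move=> i s hs; apply: leq_trans (idx_lt hs) (hsize i).
exists phi; split.
- move=> s s' /bigcupP [i _ hs] /bigcupP [j _ hs'].
  rewrite (phiE _ _ hs) (phiE _ _ hs') => he.
  case: (E_inj hm (ltn_ord i) (ltn_ord j) (klt _ _ hs) (klt _ _ hs') he) => eij.
  have eij' : i = j by apply: val_inj.
  subst j => hk.
  have := @index_inj _ s (enum (S i)) s s'; rewrite !mem_enum; move=> H; apply: H => //.
- move=> s /bigcupP [i _ hs]; rewrite (phiE _ _ hs).
  exact: E_card hm (ltn_ord i) (klt _ _ hs).
- move=> i s s' hs hs' ne; rewrite (phiE _ _ hs) (phiE _ _ hs').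
  apply: E_disj hm (ltn_ord i) (klt _ _ hs) (klt _ _ hs') _.
  apply: contra ne => /eqP h.
  apply/eqP; have := @index_inj _ s (enum (S i)) s s'; rewrite !mem_enum.
  move=> H; apply: H => //.
Qed.

Theorem mainTheorem12 (n : nat) (hn : 1 <= n) (T : finType)
    (S : 'I_(2 * n ^ 2 - 1) -> {set T})
    (hdisj : forall i j, i != j -> [disjoint S i & S j])
    (hsize : forall i, #|S i| <= n ^ 2) :
  exists phi : T -> {set 'I_(2 * n ^ 2)},
    [/\ {in \bigcup_i S i &, injective phi},
        (forall s, s \in \bigcup_i S i -> #|phi s| = 2)
      & (forall i s s', s \in S i -> s' \in S i -> s != s' ->
           [disjoint phi s & phi s'])].
Proof.
apply: main_gen => //; by rewrite expn_gt0 hn.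
Qed.
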